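(* Let $(f^*,g^* )$ be a stationary $\hat\alpha$-discounted Nash equilibrium of a two-player continuous time stochastic game for some $\hat\alpha>0$, with $\|\mu\|>0$, and suppose: (N1) $(f^*,g^* )$ is pure, i.e. for each $s\in S$ there are $a^1_s\in A^1(s)$, $a^2_s\in A^2(s)$ with $f^*(s,a^1_s)=1$, $g^*(s,a^2_s)=1$; (N2) $Q(f^*,g^* )=0$, i.e. every state is absorbing under $(f^*,g^* )$; (N3) for all $s\in S$, $a^1\in A^1(s)$: $r^1(s,a^1,a^2_s)\ge\sum_{s'}\left(\frac{\mu(s',s,a^1,a^2_s)}{\|\mu\|}+\delta(s,s')\right)r^1(s',a^1_{s'},a^2_{s'})$, and for all $s\in S$, $a^2\in A^2(s)$: $r^2(s,a^1_s,a^2)\ge\sum_{s'}\left(\frac{\mu(s',s,a^1_s,a^2)}{\|\mu\|}+\delta(s,s')\right)r^2(s',a^1_{s'},a^2_{s'})$. Then $(f^*,g^* )$ is a Blackwell-Nash equilibrium.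
   Context: A two-player continuous time stochastic game consists of a finite state set $S$, finite nonempty action sets $A^1(s),A^2(s)$, reward rates $r^i(s,a^1,a^2)$ ($i=1,2$), and transition rates $\mu(s',s,a^1,a^2)\ge0$ from $s$ to $s'\ne s$, with $\mu(s,s,a^1,a^2)=-\sum_{s'\ne s}\mu(s',s,a^1,a^2)$. Let $\|\mu\|=\max_{s,a^1,a^2}\sum_{s'\ne s}\mu(s',s,a^1,a^2)$ and let $\delta(s,s')$ be the Kronecker delta. Stationary strategies $f,g$ assign to each state a probability distribution on $A^1(s)$, resp. $A^2(s)$. For a stationary pair, $r^i(s,f,g)=\sum_{a^1,a^2}f(s,a^1)g(s,a^2)r^i(s,a^1,a^2)$ and $Q(f,g)$ is the generator matrix with $Q(f,g)_{ss'}=\sum_{a^1,a^2}f(s,a^1)g(s,a^2)\mu(s',s,a^1,a^2)$. For $\alpha>0$ the $\alpha$-discounted payoff is $v^i_\alpha(f,g)=(\alpha I-Q(f,g))^{-1}r^i(f,g)$ (equivalently $E^s_{f,g}\int_0^\infty e^{-\alpha t}r^i(s_t,f,g)dt$). A stationary pair $(f^*,g^* )$ is an $\alpha$-discounted Nash equilibrium if for all $s$, $v^1_\alpha(s,f^*,g^* )\ge v^1_\alpha(s,f,g^* )$ for all stationary $f$ and $v^2_\alpha(s,f^*,g^* )\ge v^2_\alpha(s,f^*,g)$ for all stationary $g$. It is a Blackwell-Nash equilibrium (BNE) if there is $\alpha_0>0$ such that it is an $\alpha$-discounted Nash equilibrium for all $\alpha\in(0,\alpha_0]$. *)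

(* Defs.v *)
From HB Require Import structures.
From mathcomp Require Import all_boot all_order all_algebra.
Unset Implicit Arguments. Unset Printing Implicit Defensive.
Import Order.TTheory GRing.Theory Num.Theory.
Local Open Scope ring_scope.

Section Game.
Variables (R : realFieldType) (n : nat).
Variables (A1 A2 : 'I_n -> finType).

(* mu s' s a1 a2 : transition rate from s to s' (only meaningful for s' <> s) *)
Definition rates := 'I_n -> forall s : 'I_n, A1 s -> A2 s -> R.
Definition rewards := forall s : 'I_n, A1 s -> A2 s -> R.

Definition mu_full (mu : rates) (s' s : 'I_n) (a1 : A1 s) (a2 : A2 s) : R :=
  if s' == s then - \sum_(t < n | t != s) mu t s a1 a2 else mu s' s a1 a2.

Definition valid_rates (mu : rates) : Prop :=
  forall s' s a1 a2, s' != s -> 0 <= mu s' s a1 a2.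

Definition norm_mu (mu : rates) : R :=
  \big[Num.max/0]_(s < n) \big[Num.max/0]_(a1 : A1 s) \big[Num.max/0]_(a2 : A2 s)
     \sum_(t < n | t != s) mu t s a1 a2.

Definition strat1 (f : forall s, A1 s -> R) : Prop :=
  forall s, (forall a, 0 <= f s a) /\ \sum_(a : A1 s) f s a = 1.
Definition strat2 (g : forall s, A2 s -> R) : Prop :=
  forall s, (forall a, 0 <= g s a) /\ \sum_(a : A2 s) g s a = 1.

Definition rbar (r : rewards) (f : forall s, A1 s -> R) (g : forall s, A2 s -> R)
  : 'cV[R]_n :=
  \col_s \sum_(a1 : A1 s) \sum_(a2 : A2 s) f s a1 * g s a2 * r s a1 a2.

Definition Qmat (mu : rates) (f : forall s, A1 s -> R) (g : forall s, A2 s -> R)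
  : 'M[R]_n :=
  \matrix_(s, s') \sum_(a1 : A1 s) \sum_(a2 : A2 s) f s a1 * g s a2 * mu_full mu s' s a1 a2.

Definition vdisc (mu : rates) (r : rewards) (alpha : R)
  (f : forall s, A1 s -> R) (g : forall s, A2 s -> R) : 'cV[R]_n :=
  invmx (alpha%:M - Qmat mu f g) *m rbar r f g.

Definition is_disc_Nash (mu : rates) (r1 r2 : rewards) (alpha : R)
  (f : forall s, A1 s -> R) (g : forall s, A2 s -> R) : Prop :=
  forall s : 'I_n,
    (forall f', strat1 f' -> vdisc mu r1 alpha f' g s 0 <= vdisc mu r1 alpha f g s 0) /\
    (forall g', strat2 g' -> vdisc mu r2 alpha f g' s 0 <= vdisc mu r2 alpha f g s 0).

Definition is_BNE (mu : rates) (r1 r2 : rewards)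
  (f : forall s, A1 s -> R) (g : forall s, A2 s -> R) : Prop :=
  exists alpha0 : R, 0 < alpha0 /\
    forall alpha, 0 < alpha -> alpha <= alpha0 -> is_disc_Nash mu r1 r2 alpha f g.

End Game.
Arguments mu_full {R n A1 A2} mu s' s a1 a2.
Arguments norm_mu {R n A1 A2} mu.
Arguments vdisc {R n A1 A2} mu r alpha f g.
Arguments is_disc_Nash {R n A1 A2} mu r1 r2 alpha f g.
Arguments is_BNE {R n A1 A2} mu r1 r2 f g.
Arguments Qmat {R n A1 A2} mu f g.
Arguments valid_rates {R n A1 A2} mu.
Arguments strat1 {R n A1} f.
Arguments strat2 {R n A2} g.
Arguments rbar {R n A1 A2} r f g.

(* Main.v *)
Require Import Defs.
From HB Require Import structures.
From mathcomp Require Import all_boot all_order all_algebra.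
From mathcomp Require Import ring lra.
Import Order.TTheory GRing.Theory Num.Theory.
Local Open Scope ring_scope.
Section Gen.
Variables (R : realFieldType) (n : nat).

Lemma Mentry (Q : 'M[R]_n) a (z : 'cV_n) t :
  ((a%:M - Q) *m z) t 0 = a * z t 0 - \sum_j Q t j * z j 0.
Proof. by rewrite mulmxBl mul_scalar_mx !mxE. Qed.

Definition isgen (Q : 'M[R]_n) :=
  (forall s t, s != t -> 0 <= Q s t) /\ (forall s, \sum_t Q s t = 0).

Lemma gen_nonneg : forall (Q : 'M[R]_n) (a : R) (u : 'cV[R]_n), 0 < a -> isgen Q ->
  (forall s, 0 <= ((a%:M - Q) *m u) s 0) -> forall s, 0 <= u s 0.
Proof.
move=> Q a u ha [hoff hsum] hM s.
case: (@arg_minP _ R _ s xpredT (fun i => u i 0) isT) => m _ hm.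
suff: 0 <= u m 0 by move=> h; apply: le_trans h (hm s isT).
have := hM m; rewrite Mentry.
have -> : \sum_j Q m j * u j 0 = \sum_j Q m j * (u j 0 - u m 0).
  under [in RHS]eq_bigr => j _ do rewrite mulrBr.
  by rewrite sumrB -mulr_suml hsum mul0r subr0.
have : 0 <= \sum_j Q m j * (u j 0 - u m 0).
  apply: sumr_ge0 => j _; case: (eqVneq m j) => [->|hj].
    by rewrite subrr mulr0.
  by apply: mulr_ge0; [exact: hoff|rewrite subr_ge0; exact: hm].
move=> h1 h2; have h3 : 0 <= a * u m 0 by lra.
by rewrite -(pmulr_rge0 _ ha).
Qed.

Lemma gen_unit (Q : 'M[R]_n) (a : R) : 0 < a -> isgen Q -> (a%:M - Q) \in unitmx.
Proof.
move=> ha hQ; rewrite -unitmx_tr -row_free_unit -kermx_eq0.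
apply/eqP/matrixP => i j.
set K := kermx _.
have hk : row i K *m (a%:M - Q)^T = 0 by apply/sub_kermxP; exact: row_sub.
have hk' : (a%:M - Q) *m (row i K)^T = 0.
  by rewrite -[_ *m _]trmxK trmx_mul trmxK hk trmx0.
have h1 := (@gen_nonneg Q a) (row i K)^T ha hQ.
have h2 := (@gen_nonneg Q a) (- (row i K)^T) ha hQ.
rewrite hk' in h1; rewrite mulmxN hk' oppr0 in h2.
have e1 : 0 <= (row i K)^T j 0 by apply: h1 => s; rewrite mxE.
have e2 : 0 <= (- (row i K)^T) j 0 by apply: h2 => s; rewrite mxE.
move: e1 e2; rewrite !mxE => e1 e2.
apply/eqP; rewrite eq_le; apply/andP; split; last by [].
by rewrite -oppr_ge0.
Qed.

Lemma gen_cmp (Q : 'M[R]_n) (a : R) (r w : 'cV[R]_n) : 0 < a -> isgen Q ->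
  (forall s, r s 0 <= ((a%:M - Q) *m w) s 0) ->
  forall s, (invmx (a%:M - Q) *m r) s 0 <= w s 0.
Proof.
move=> ha hQ hr s; rewrite -subr_ge0.
have hu := gen_unit Q a ha hQ.
have := (@gen_nonneg Q a) (w - invmx (a%:M - Q) *m r) ha hQ.
rewrite mulmxBr mulKVmx // => h.
have : 0 <= (w - invmx (a%:M - Q) *m r) s 0.
  apply: h => t; rewrite [X in 0 <= X]mxE [X in 0 <= _ + X]mxE subr_ge0.
  by have := hr t; rewrite [X in _ <= X]mxE.
by rewrite [X in 0 <= X -> _]mxE [X in 0 <= _ + X -> _]mxE.
Qed.
End Gen.
Arguments isgen {R n}.
Arguments Mentry {R n}.
Arguments gen_nonneg {R n}.
Arguments gen_unit {R n}.
Arguments gen_cmp {R n}.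
Lemma sum_pick (R : realFieldType) (T : finType) (d : T) (F : T -> R) :
  \sum_c (c == d)%:R * F c = F d.
Proof.
rewrite (bigD1 d) //= eqxx mul1r big1 ?addr0 // => c hc.
by rewrite (negbTE hc) mul0r.
Qed.

Section MDP.
Variables (R : realFieldType) (n : nat) (B : 'I_n -> finType).
Variables (q : forall s, B s -> 'I_n -> R) (rho : forall s, B s -> R).

Definition QQ (h : forall s, B s -> R) : 'M[R]_n :=
  \matrix_(s, t) \sum_(b : B s) h s b * q s b t.
Definition rr (h : forall s, B s -> R) : 'cV[R]_n :=
  \col_s \sum_(b : B s) h s b * rho s b.
Definition stratB (h : forall s, B s -> R) :=
  forall s, (forall b, 0 <= h s b) /\ \sum_(b : B s) h s b = 1.

Hypothesis hqoff : forall s b t, s != t -> 0 <= q s b t.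
Hypothesis hqsum : forall s b, \sum_t q s b t = 0.

Lemma QQ_gen h : stratB h -> isgen (QQ h).
Proof.
move=> hh; split.
  move=> s t st; rewrite mxE; apply: sumr_ge0 => b _.
  by apply: mulr_ge0; [case: (hh s)|exact: hqoff].
move=> s; under eq_bigr => t _ do rewrite mxE.
rewrite exchange_big /=; apply: big1 => b _.
by rewrite -mulr_sumr hqsum mulr0.
Qed.

Lemma inv_sol (M : 'M[R]_n) (x y : 'cV[R]_n) :
  M \in unitmx -> M *m x = y -> invmx M *m y = x.
Proof. by move=> hu <-; rewrite mulKmx. Qed.

Variables (b0 : forall s, B s) (h0 : forall s, B s -> R).
Hypothesis hh0 : stratB h0.
Hypothesis h0b : forall s, h0 s (b0 s) = 1.
Hypothesis hq0 : forall s t, q s (b0 s) t = 0.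

Lemma h0pure s b : h0 s b = (b == b0 s)%:R.
Proof.
case: (eqVneq b (b0 s)) => [->|ne]; first by rewrite h0b.
have [hp hs] := hh0 s.
move: hs; rewrite (bigD1 (b0 s)) //= h0b => e.
have e' : \sum_(i | i != b0 s) h0 s i = 0.
  by apply: (@addrI _ 1); rewrite e addr0.
have := (psumr_eq0P (fun i _ => hp i) e') b ne.
by move=> ->.
Qed.

Lemma h0coll s (F : B s -> R) : \sum_b h0 s b * F b = F (b0 s).
Proof. under eq_bigr => b _ do rewrite h0pure. exact: sum_pick. Qed.

Definition w : 'cV[R]_n := \col_t rho t (b0 t).

Lemma QQh0 : QQ h0 = 0.
Proof. by apply/matrixP => s t; rewrite !mxE h0coll hq0. Qed.

Lemma rrh0 : rr h0 = w.
Proof. by apply/matrixP => s t; rewrite !mxE h0coll. Qed.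

Lemma Vh0 a : 0 < a -> invmx (a%:M - QQ h0) *m rr h0 = a^-1 *: w.
Proof.
move=> ha; apply: inv_sol; first exact: gen_unit _ _ ha (QQ_gen _ hh0).
by rewrite QQh0 subr0 mul_scalar_mx scalerA mulfV ?gt_eqF // scale1r rrh0.
Qed.

Definition hd (s : 'I_n) (b : B s) : forall t, B t -> R :=
  fun t c => (Tagged (fun i => B i) c ==
     (if t == s then Tagged (fun i => B i) b else Tagged (fun i => B i) (b0 t)))%:R.

Lemma hd_ne s b t c : t != s -> hd s b t c = (c == b0 t)%:R.
Proof. by move=> ts; rewrite /hd (negbTE ts) eq_Tagged. Qed.

Lemma hd_eq s b c : hd s b s c = (c == b)%:R.
Proof. by rewrite /hd eqxx eq_Tagged. Qed.

Lemma hd_strat s b : stratB (hd s b).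
Proof.
move=> t; split; first by move=> c; rewrite /hd ler0n.
case: (eqVneq t s) => [->|ts].
  under eq_bigr => c _ do rewrite hd_eq -[_%:R]mulr1.
  by rewrite sum_pick.
under eq_bigr => c _ do rewrite hd_ne // -[_%:R]mulr1.
by rewrite sum_pick.
Qed.

Variables (ah lam : R).
Hypothesis hah : 0 < ah.
Hypothesis hlam : 0 < lam.
Hypothesis hN : forall h, stratB h -> forall s,
  (invmx (ah%:M - QQ h) *m rr h) s 0 <= (invmx (ah%:M - QQ h0) *m rr h0) s 0.
Hypothesis hN3 : forall s b,
  \sum_t (q s b t / lam + (s == t)%:R) * rho t (b0 t) <= rho s b.

Definition D s b := \sum_t q s b t * rho t (b0 t).

Lemma Dle s b : rho s b <= rho s (b0 s) - D s b / ah.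
Proof.
have hs := hd_strat s b.
have hu := gen_unit _ _ hah (QQ_gen _ hs).
set v := invmx (ah%:M - QQ (hd s b)) *m rr (hd s b).
have hv : (ah%:M - QQ (hd s b)) *m v = rr (hd s b) by rewrite mulKVmx.
move: (hN _ hs s); rewrite -/v Vh0 // [X in _ <= X]mxE [w _ _]mxE => hNs.
have QQne t j : t != s -> QQ (hd s b) t j = 0.
  by move=> ts; rewrite mxE; under eq_bigr => c _ do rewrite hd_ne //; rewrite sum_pick hq0.
have QQeq j : QQ (hd s b) s j = q s b j.
  by rewrite mxE; under eq_bigr => c _ do rewrite hd_eq; rewrite sum_pick.
have vne t : t != s -> v t 0 = ah^-1 * rho t (b0 t).
  move=> ts; have := congr1 (fun M : 'cV[R]_n => M t 0) hv; rewrite /= Mentry big1; last first.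
    by move=> j _; rewrite QQne // mul0r.
  rewrite subr0 [rr _ _ _]mxE; under eq_bigr => c _ do rewrite hd_ne //; rewrite sum_pick => <-.
  by rewrite mulrA mulVf ?gt_eqF // mul1r.
have := congr1 (fun M : 'cV[R]_n => M s 0) hv; rewrite /= Mentry [rr _ _ _]mxE.
under [X in _ = X -> _]eq_bigr => c _ do rewrite hd_eq.
rewrite sum_pick (bigD1 s) //= QQeq.
under eq_bigr => j hj do rewrite QQeq vne // mulrCA.
rewrite -mulr_sumr => E.
have qs : q s b s <= 0.
  have := hqsum s b; rewrite (bigD1 s) //= => e.
  have : 0 <= \sum_(i | i != s) q s b i.
    by apply: sumr_ge0 => i hi; apply: hqoff; rewrite eq_sym.
  lra.
rewrite /D (bigD1 s) //=.
set S' := \sum_(i | i != s) _ in E *.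
set ia := ah^-1 in hNs E *.
have hia : ah * ia = 1 by rewrite mulfV ?gt_eqF.
set vs := v s 0 in hNs E *.
set ws := rho s (b0 s) in hNs E *.
have P : 0 <= (ah - q s b s) * (ia * ws - vs).
  by apply: mulr_ge0; rewrite subr_ge0 //; apply: le_trans qs (ltW hah).
have EE : (ah - q s b s) * (ia * ws - vs) = (ah * ia) * ws - ah * vs - q s b s * ws * ia + q s b s * vs by ring.
rewrite hia mul1r in EE.
have EE2 : (q s b s * ws + S') / ah = q s b s * ws * ia + ia * S' by rewrite /ia; ring.
rewrite EE2; lra.
Qed.

Lemma Dneg s b : D s b <= 0.
Proof.
have h1 := Dle s b.
have h2 := hN3 s b.
have e : \sum_t (q s b t / lam + (s == t)%:R) * rho t (b0 t) = D s b / lam + rho s (b0 s).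
  under eq_bigr => t _ do rewrite mulrDl.
  rewrite big_split /= /D mulr_suml; congr (_ + _).
    by apply: eq_bigr => t _; rewrite mulrAC.
  rewrite (bigD1 s) //= eqxx mul1r big1 ?addr0 // => t ht.
  by rewrite eq_sym (negbTE ht) mul0r.
rewrite e in h2.
case: (lerP (D s b) 0) => // hD.
have : 0 < D s b / lam by rewrite divr_gt0.
have : 0 < D s b / ah by rewrite divr_gt0.
lra.
Qed.

Lemma mdp_main a : 0 < a -> a <= ah -> forall h, stratB h -> forall s,
  (invmx (a%:M - QQ h) *m rr h) s 0 <= (invmx (a%:M - QQ h0) *m rr h0) s 0.
Proof.
move=> ha hle h hh s; rewrite Vh0 //.
apply: gen_cmp => //; first exact: QQ_gen.
move=> t; rewrite Mentry.
have [hp hs] := hh t.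
have e1 : \sum_j QQ h t j * (a^-1 *: w) j 0 = \sum_c h t c * (a^-1 * D t c).
  under eq_bigr => j _ do rewrite mxE mulr_suml.
  rewrite exchange_big /=; apply: eq_bigr => c _.
  rewrite /D !mulr_sumr; apply: eq_bigr => j _; rewrite !mxE; ring.
rewrite e1 mxE mxE mulrA mulfV ?gt_eqF // mul1r mxE.
have -> : rho t (b0 t) = \sum_c h t c * rho t (b0 t) by rewrite -mulr_suml hs mul1r.
rewrite -sumrB; apply: ler_sum => c _; rewrite -mulrBr; apply: ler_wpM2l => //.
have h1 := Dle t c; have h2 := Dneg t c.
have hi : ah^-1 <= a^-1 by rewrite lef_pV2 ?posrE.
have : D t c * a^-1 <= D t c * ah^-1 by rewrite ler_wnM2l.
rewrite mulrC; lra.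
Qed.
End MDP.

Lemma coll (R : realFieldType) (T : finType) (h : T -> R) (d : T) :
  (forall b, 0 <= h b) -> \sum_b h b = 1 -> h d = 1 ->
  forall F, \sum_b h b * F b = F d.
Proof.
move=> hp hs hd F.
have hpure b : h b = (b == d)%:R.
  case: (eqVneq b d) => [->|ne]; first by rewrite hd.
  move: hs; rewrite (bigD1 d) //= hd => e.
  have e' : \sum_(i | i != d) h i = 0.
    by apply: (@addrI _ 1); rewrite e addr0.
  have := (psumr_eq0P (fun i _ => hp i) e') b ne.
  by move=> ->.
under eq_bigr => b _ do rewrite hpure. exact: sum_pick.
Qed.

Lemma mu_off (R : realFieldType) (n : nat) (A1 A2 : 'I_n -> finType)
  (mu : rates R n A1 A2) (hmu : valid_rates mu) s t a1 a2 :
  s != t -> 0 <= mu_full mu t s a1 a2.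
Proof. by move=> st; rewrite /mu_full eq_sym (negbTE st); apply: hmu; rewrite eq_sym. Qed.

Lemma mu_sum (R : realFieldType) (n : nat) (A1 A2 : 'I_n -> finType)
  (mu : rates R n A1 A2) s a1 a2 :
  \sum_t mu_full mu t s a1 a2 = 0.
Proof.
rewrite (bigD1 s) //= /mu_full eqxx.
under eq_bigr => t ht do rewrite (negbTE ht).
by rewrite addNr.
Qed.

Arguments coll {R T h d}.
Arguments QQ {R n B} q h.
Arguments rr {R n B} rho h.
Arguments stratB {R n B} h.
Arguments mu_off {R n A1 A2 mu} hmu {s t} a1 a2.
Arguments mu_sum {R n A1 A2} mu s a1 a2.

Theorem theorem6 (R : realFieldType) (n : nat) (A1 A2 : 'I_n -> finType)
  (hA1 : forall s, (0 < #|A1 s|)%N) (hA2 : forall s, (0 < #|A2 s|)%N)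
  (mu : rates R n A1 A2) (hmu : valid_rates mu) (r1 r2 : rewards R n A1 A2)
  (fs : forall s, A1 s -> R) (gs : forall s, A2 s -> R)
  (hf : strat1 fs) (hg : strat2 gs)
  (alphahat : R) (halpha : 0 < alphahat)
  (hNash : is_disc_Nash mu r1 r2 alphahat fs gs)
  (hnorm : 0 < norm_mu mu)
  (a1s : forall s, A1 s) (a2s : forall s, A2 s)
  (N1f : forall s, fs s (a1s s) = 1) (N1g : forall s, gs s (a2s s) = 1)
  (N2 : Qmat mu fs gs = 0)
  (N3a : forall s (a1 : A1 s),
     \sum_(s' < n) (mu_full mu s' s a1 (a2s s) / norm_mu mu + (s == s')%:R)
                   * r1 s' (a1s s') (a2s s') <= r1 s a1 (a2s s))
  (N3b : forall s (a2 : A2 s),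
     \sum_(s' < n) (mu_full mu s' s (a1s s) a2 / norm_mu mu + (s == s')%:R)
                   * r2 s' (a1s s') (a2s s') <= r2 s (a1s s) a2) :
  is_BNE mu r1 r2 fs gs.
Proof.
have c1 s := coll (proj1 (hf s)) (proj2 (hf s)) (N1f s).
have c2 s := coll (proj1 (hg s)) (proj2 (hg s)) (N1g s).
have Q1 f' : Qmat mu f' gs = QQ (fun s a t => mu_full mu t s a (a2s s)) f'.
  apply/matrixP => s t; rewrite !mxE; apply: eq_bigr => a _.
  under eq_bigr => a' _ do rewrite -mulrA.
  by rewrite -mulr_sumr c2.
have R1 f' : rbar r1 f' gs = rr (fun s a => r1 s a (a2s s)) f'.
  apply/matrixP => s t; rewrite !mxE; apply: eq_bigr => a _.
  under eq_bigr => a' _ do rewrite -mulrA.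
  by rewrite -mulr_sumr c2.
have Q2 g' : Qmat mu fs g' = QQ (fun s a t => mu_full mu t s (a1s s) a) g'.
  apply/matrixP => s t; rewrite !mxE exchange_big /=; apply: eq_bigr => a _.
  under eq_bigr => a' _ do rewrite -mulrA.
  by rewrite c1 mulrC.
have R2 g' : rbar r2 fs g' = rr (fun s a => r2 s (a1s s) a) g'.
  apply/matrixP => s t; rewrite !mxE exchange_big /=; apply: eq_bigr => a _.
  under eq_bigr => a' _ do rewrite -mulrA.
  by rewrite c1 mulrC.
have hq0 s t : mu_full mu t s (a1s s) (a2s s) = 0.
  have := congr1 (fun M : 'M[R]_n => M s t) N2; rewrite /= !mxE.
  under eq_bigr => a _ do under eq_bigr => a' _ do rewrite -mulrA.
  under eq_bigr => a _ do rewrite -mulr_sumr c2.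
  by rewrite c1.
exists alphahat; split => // alpha ha hle s; split.
  move=> f' hf'; rewrite /vdisc !Q1 !R1.
  apply: (@mdp_main R n A1 (fun s a t => mu_full mu t s a (a2s s))
            (fun s a => r1 s a (a2s s))
            (fun s a t st => mu_off hmu a (a2s s) st)
            (fun s a => mu_sum mu s a (a2s s))
            a1s fs hf N1f (fun s t => hq0 s t) alphahat (norm_mu mu) halpha hnorm
            _ N3a alpha ha hle f' hf' s).
  move=> h hh s'; have := proj1 (hNash s') h hh; by rewrite /vdisc !Q1 !R1.
move=> g' hg'; rewrite /vdisc !Q2 !R2.
apply: (@mdp_main R n A2 (fun s a t => mu_full mu t s (a1s s) a)
          (fun s a => r2 s (a1s s) a)
          (fun s a t st => mu_off hmu (a1s s) a st)
          (fun s a => mu_sum mu s (a1s s) a)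
          a2s gs hg N1g (fun s t => hq0 s t) alphahat (norm_mu mu) halpha hnorm
          _ N3b alpha ha hle g' hg' s).
move=> h hh s'; have := proj2 (hNash s') h hh; by rewrite /vdisc !Q2 !R2.
Qed.
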